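(* Let $p$ be a prime, let $\mathcal{F}$ be a saturated fusion system on a finite $p$-group $S$, and let $\Omega$ be a finite $(S,S)$-biset which is $\mathcal{F}$-stable and $\mathcal{F}$-generated and which contains the $(S,S)$-biset $S$ (with $S$ acting on itself by left and right multiplication) as a sub-biset. Consider the square matrix \[ \bigl( |P\backslash \Omega /Q| \bigr)_{P,Q}, \] whose rows and columns are indexed by the $\mathcal{F}$-conjugacy classes of subgroups of $S$ and whose $(P,Q)$-entry is the number of $(P,Q)$-orbits of $\Omega$. Then the rank of this matrix (over $\mathbb{Q}$) is equal to the number of $\mathcal{F}$-conjugacy classes of cyclic subgroups of $S$.
   Context: A saturated fusion system $\mathcal{F}$ on $S$ is a category whose objects are the subgroups of $S$ and whose morphisms are injective homomorphisms, containing conjugations by elements of $S$, closed under restriction and inverses, and satisfying the Broto–Levi–Oliver saturation axioms; $P,P'\leq S$ are $\mathcal{F}$-conjugate if there is an isomorphism $P\to P'$ in $\mathcal{F}$. An $(S,S)$-biset is a finite set with commuting left and right $S$-actions, viewed as a left $S\times S$-set via $(s,t)\cdot x=sxt^{-1}$; the $(P,Q)$-orbits are the orbits of $P\times Q$. A left $S$-set $X$ is $\mathcal{F}$-stable if for every $P\leq S$ and every morphism $\varphi\colon P\to S$ in $\mathcal{F}$, the $P$-sets obtained by restricting the $S$-action along the inclusion and along $\varphi$ are isomorphic; an $(S,S)$-biset is $\mathcal{F}$-stable if it is $(\mathcal{F}\times\mathcal{F})$-stable as a left $S\times S$-set. An $(S,S)$-biset is $\mathcal{F}$-generated if all isotropy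 subgroups of the left $S\times S$-action have the form $\Delta(P,\varphi)=\{(u,\varphi(u))\mid u\in P\}$ with $P\leq S$ and $\varphi\colon P\to S$ a morphism in $\mathcal{F}$. *)

(* Defs.v *)
From mathcomp Require Import all_boot all_order all_algebra all_fingroup all_solvable.
Set Implicit Arguments. Unset Strict Implicit. Unset Printing Implicit Defensive.
Local Open Scope group_scope.

Section FusionBisets.
Variable gT : finGroupType.
Local Notation fsys := ({set gT} -> {ffun gT -> gT} -> bool).

(** A fusion system on S is given by a boolean predicate [F P f] meaning
   "f restricted to P is a morphism P -> S of the fusion system". *)

Definition subgrp (S P : {set gT}) := group_set P && (P \subset S).

Definition fusion_system (S : {group gT})
    (F : {set gT} -> {ffun gT -> gT} -> bool) : Prop :=
  [/\
      forall P (f : {ffun gT -> gT}), F P f ->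
        [/\ subgrp S P, {in P &, {morph f : x y / x * y}},
            {in P &, injective f} & f @: P \subset S],
      forall P (f g : {ffun gT -> gT}), F P f -> {in P, f =1 g} -> F P g,
      forall P s, subgrp S P -> s \in S -> F P [ffun x => x ^ s] &
     [/\
      forall P Q (f : {ffun gT -> gT}), F P f -> subgrp P Q -> F Q f,
      forall P (f g : {ffun gT -> gT}), F P f -> F (f @: P) g -> F P [ffun x => g (f x)] &
      forall P (f g : {ffun gT -> gT}), F P f -> {in P, forall x, g (f x) = x} -> F (f @: P) g]].

Definition Fconj (F : {set gT} -> {ffun gT -> gT} -> bool) (P Q : {set gT}) :=
  [exists f : {ffun gT -> gT}, F P f && (f @: P == Q)].

Definition fully_normalized (S : {group gT}) (F : fsys) (P : {set gT}) :=
  forall Q : {set gT}, Fconj F P Q -> #|'N_S(Q)| <= #|'N_S(P)|.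

Definition fully_centralized (S : {group gT}) (F : fsys) (P : {set gT}) :=
  forall Q : {set gT}, Fconj F P Q -> #|'C_S(Q)| <= #|'C_S(P)|.

Definition AutF (F : fsys) (P : {set gT}) : {set {perm gT}} :=
  [set a in Aut P | F P [ffun x => a x]].

Definition AutS (S : {group gT}) (P : {set gT}) : {set {perm gT}} :=
  [set a in Aut P | [exists g in 'N_S(P), [forall x in P, a x == x ^ g]]].

Definition Nphi (S : {group gT}) (P : {set gT}) (f : {ffun gT -> gT}) : {set gT} :=
  [set g in 'N_S(P) |
     [exists h in 'N_S(f @: P), [forall x in P, f (x ^ g) == (f x) ^ h]]].

Definition saturated (p : nat) (S : {group gT}) (F : fsys) : Prop :=
  fusion_system S F /\
  (forall P : {group gT}, P \subset S -> fully_normalized S F P ->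
     fully_centralized S F P /\ p.-Sylow(AutF F P) (AutS S P)) /\
  (forall (P : {group gT}) f, F P f -> fully_centralized S F (f @: P) ->
     exists g : {ffun gT -> gT}, F (Nphi S P f) g /\ {in P, g =1 f}).

Definition biset (S : {group gT}) (T : finType)
    (l : gT -> T -> T) (r : T -> gT -> T) : Prop :=
  [/\ forall x, l 1 x = x,
      forall x, r x 1 = x,
      forall s s' x, s \in S -> s' \in S -> l (s * s') x = l s (l s' x),
      forall t t' x, t \in S -> t' \in S -> r x (t * t') = r (r x t) t' &
      forall s t x, s \in S -> t \in S -> r (l s x) t = l s (r x t)].

Variables (T : finType) (l : gT -> T -> T) (r : T -> gT -> T).

Definition bact (g : gT * gT) (x : T) : T := l g.1 (r x g.2^-1).

Definition pq_orbit (P Q : {set gT}) (x : T) : {set T} :=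
  [set bact (u, v) x | u in P, v in Q].

Definition n_orbits (P Q : {set gT}) : nat :=
  #|[set pq_orbit P Q x | x : T]|.

(** F-stability: for every morphism psi : R -> S x S of the product fusion
   system F x F (i.e. psi = (phi x chi) restricted to R <= P x Q with
   phi in F(P), chi in F(Q)), the R-sets obtained by restricting along the
   inclusion and along psi are isomorphic. *)
Definition Fstable (S : {group gT}) (F : fsys) : Prop :=
  forall (P Q : {group gT}) (phi chi : {ffun gT -> gT}),
    F P phi -> F Q chi ->
    forall R : {group (gT * gT)}, R \subset setX P Q ->
      exists beta : T -> T, bijective beta /\
        forall g x, g \in R ->
          beta (bact g x) = bact (phi g.1, chi g.2) (beta x).

Definition isotropy (S : {group gT}) (x : T) : {set gT * gT} :=
  [set g in setX S S | bact g x == x].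

Definition Delta (P : {set gT}) (phi : {ffun gT -> gT}) : {set gT * gT} :=
  [set (u, phi u) | u in P].

Definition Fgenerated (S : {group gT}) (F : fsys) : Prop :=
  forall x : T, exists (P : {group gT}) (phi : {ffun gT -> gT}),
    F P phi /\ isotropy S x = Delta P phi.

(** The (S,S)-biset S is a sub-biset: an injective biset map S -> T. *)
Definition contains_regular (S : {group gT}) : Prop :=
  exists iota : gT -> T, {in S &, injective iota} /\
    forall s y t, s \in S -> y \in S -> t \in S ->
      iota (s * y * t) = l s (r (iota y) t).

End FusionBisets.

Definition Fclass (gT : finGroupType) (S : {group gT}) (F : {set gT} -> {ffun gT -> gT} -> bool) (P : {set gT})
  : {set {set gT}} := [set Q : {set gT} | subgrp S Q && Fconj F P Q].

Definition Fclasses (gT : finGroupType) (S : {group gT}) (F : {set gT} -> {ffun gT -> gT} -> bool)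
  : {set {set {set gT}}} :=
  [set Fclass S F P | P in [set P : {set gT} | subgrp S P]].

Definition Fclasses_cyclic (gT : finGroupType) (S : {group gT}) (F : {set gT} -> {ffun gT -> gT} -> bool)
  : {set {set {set gT}}} :=
  [set Fclass S F P | P in [set P : {set gT} | subgrp S P && cyclic P]].

Definition class_rep (gT : finGroupType) (C : {set {set gT}}) : {set gT} :=
  odflt set0 [pick P in C].

Definition orbit_matrix (gT : finGroupType) (S : {group gT}) (F : {set gT} -> {ffun gT -> gT} -> bool)
    (T : finType) (l : gT -> T -> T) (r : T -> gT -> T)
  : 'M[rat]_(#|Fclasses S F|) :=
  \matrix_(i, j)
    ((n_orbits l r (class_rep (enum_val i)) (class_rep (enum_val j)))%:R)%R.

(* Main.v *)
Require Import Defs.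
From mathcomp Require Import all_boot all_order all_algebra all_fingroup all_solvable.
Set Implicit Arguments. Unset Strict Implicit. Unset Printing Implicit Defensive.

Section PartP1.
Local Open Scope group_scope.

Section Bis.
Variables (gT : finGroupType) (S : {group gT}) (T : finType)
  (l : gT -> T -> T) (r : T -> gT -> T).
Hypothesis Hb : biset S l r.

Local Notation bact := (bact l r).

Lemma bact1 x : bact 1 x = x.
Proof. by case: Hb => l1 r1 _ _ _; rewrite /bact /= invg1 r1 l1. Qed.

Lemma bactM g h x : g \in setX S S -> h \in setX S S ->
  bact (g * h) x = bact g (bact h x).
Proof.
case: Hb => l1 r1 lM rM lr.
case: g => g1 g2; case: h => h1 h2; rewrite !inE /= => /andP[g1S g2S] /andP[h1S h2S].
rewrite /bact /= invMg lM // rM ?groupV //.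
by rewrite lr ?groupV.
Qed.

Lemma bactK g x : g \in setX S S -> bact g^-1 (bact g x) = x.
Proof. by move=> gS; rewrite -bactM ?groupV // mulVg bact1. Qed.

Lemma bactVK g x : g \in setX S S -> bact g (bact g^-1 x) = x.
Proof. by move=> gS; rewrite -bactM ?groupV // mulgV bact1. Qed.

Definition bto (x : T) (g : gT * gT) : T :=
  if g \in setX S S then bact g^-1 x else x.

Lemma bto_is_action : is_action (setX S S) bto.
Proof.
split=> [g x y | x a b aS bS]; rewrite /bto.
  by case: ifP => // gS /(congr1 (bact g)); rewrite !bactVK.
by rewrite groupM // aS bS invMg bactM ?groupV.
Qed.

Definition btoA := Action bto_is_action.

Lemma bfixV g x : g \in setX S S -> (bact g^-1 x == x) = (bact g x == x).
Proof.
move=> gS; apply/eqP/eqP => e.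
  by rewrite -{1}e bactVK.
by rewrite -{1}e bactK.
Qed.

Definition fx (u v : gT) := #|[set x | bact (u, v) x == x]|.

Lemma burnside (P Q : {group gT}) : P \subset S -> Q \subset S ->
  (n_orbits l r P Q * (#|P| * #|Q|))%N = \sum_(u in P) \sum_(v in Q) fx u v.
Proof.
move=> sPS sQS.
have sX : setX P Q \subset setX S S by apply: setXS.
have acts : [acts setX P Q, on setT | btoA].
  apply/subsetP => a aX; rewrite !inE; have := subsetP sX _ aX; rewrite inE => -> /=.
  by apply/subsetP => x _; rewrite !inE.
rewrite -cardsX.
have <- : #|orbit btoA (setX P Q) @: [set: T]| = n_orbits l r P Q.
  have E : forall x, orbit btoA (setX P Q) x = pq_orbit l r P Q x; last first.
    rewrite /n_orbits; apply: eq_card => X.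
    by apply/imsetP/imsetP => [][x _ ->]; exists x; rewrite ?E ?inE.
  move=> x; apply/setP => y; apply/imsetP/imset2P.
    case=> [[u v]] uv ->; rewrite /= /bto (subsetP sX _ uv).
    by move: uv; rewrite inE /= => /andP[uP vQ]; exists u^-1 v^-1; rewrite ?groupV.
  case=> u v uP vQ ->; exists (u^-1, v^-1); first by rewrite inE /= !groupV uP.
  have uvX : (u^-1, v^-1) \in setX S S by rewrite inE /= !groupV (subsetP sPS) ?(subsetP sQS).
  rewrite /= /bto uvX /=.
  by change ((u^-1,v^-1)^-1) with (u^-1^-1, v^-1^-1); rewrite !invgK.
apply: etrans (esym (Frobenius_Cauchy acts)) _.
rewrite pair_big_dep /=.
apply/esym; rewrite (eq_bigl (fun a => a \in setX P Q)); last by move=> [u v]; rewrite inE.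
apply: eq_bigr => a aX; rewrite /fx; apply: eq_card => x.
rewrite !inE sub1set inE /= /bto (subsetP sX _ aX) bfixV ?(subsetP sX _ aX) //.
Qed.

Lemma pairX (u v : gT) n : (u, v) ^+ n = (u ^+ n, v ^+ n).
Proof.
elim: n => [|n IH]; first by rewrite !expg0.
by rewrite !expgS IH.
Qed.

Lemma bactX g n x : g \in setX S S -> bact g x = x -> bact (g ^+ n) x = x.
Proof.
move=> gS gx; elim: n => [|n IH]; first by rewrite expg0 bact1.
by rewrite expgS bactM ?groupX // IH.
Qed.

Lemma fxE u v : fx u v = #|[set x | bact (u, v) x == x]|.
Proof. by []. Qed.

Variable F : {set gT} -> {ffun gT -> gT} -> bool.
Hypothesis Hst : Fstable l r S F.
Hypothesis Hg : Fgenerated l r S F.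
Hypothesis Hreg : contains_regular l r S.

Lemma fx_stab (P Q : {group gT}) phi chi u v : F P phi -> F Q chi ->
  u \in P -> v \in Q -> fx u v = fx (phi u) (chi v).
Proof.
move=> FP FQ uP vQ.
have sR : <[(u, v)]>%G \subset setX P Q by rewrite cycle_subG inE uP.
have [beta [bb Hbeta]] := Hst FP FQ sR.
have uvR : (u, v) \in <[(u, v)]>%G by rewrite cycle_id.
rewrite /fx -(card_imset _ (bij_inj bb)); apply: eq_card => y.
rewrite inE; apply/imsetP/eqP.
  case=> x; rewrite inE => /eqP xf ->.
  by rewrite -[in RHS]xf (Hbeta (u, v)).
move=> yf; case: bb => binv bK Kb; exists (binv y); last by rewrite Kb.
rewrite inE; apply/eqP; apply: (can_inj bK).
by rewrite (Hbeta (u, v)) // Kb yf.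
Qed.

Lemma fix_graph u v v' x : u \in S -> v \in S -> v' \in S ->
  bact (u, v) x = x -> bact (u, v') x = x -> v = v'.
Proof.
move=> uS vS v'S f1 f2; have [P [phi [_ E]]] := Hg x.
have : (u, v) \in isotropy l r S x by rewrite !inE /= uS vS f1 eqxx.
have : (u, v') \in isotropy l r S x by rewrite !inE /= uS v'S f2 eqxx.
rewrite E => /imsetP[w1 _ [-> ->]] /imsetP[w2 _ [e ->]].
by rewrite e.
Qed.

Lemma fx_gen u v x : u \in S -> v \in S -> bact (u, v) x = x ->
  exists (P : {group gT}) phi, [/\ F P phi, u \in P & phi u = v].
Proof.
move=> uS vS f1; have [P [phi [FP E]]] := Hg x.
have : (u, v) \in isotropy l r S x by rewrite !inE /= uS vS f1 eqxx.
rewrite E => /imsetP[w wP [-> ->]].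
by exists P, phi.
Qed.

Lemma fx_gen0 u v : u \in S -> v \in S -> 0 < fx u v ->
  exists (P : {group gT}) phi, [/\ F P phi, u \in P & phi u = v].
Proof.
move=> uS vS; rewrite card_gt0 => /set0Pn[x]; rewrite inE => /eqP.
exact: fx_gen.
Qed.

Lemma fx_reg u : u \in S -> 0 < fx u u.
Proof.
move=> uS; have [iota [_ Hi]] := Hreg.
rewrite card_gt0; apply/set0Pn; exists (iota 1); rewrite inE /bact /=.
by rewrite -Hi ?groupV // mulg1 mulgV.
Qed.
End Bis.

End PartP1.

Section PartP2.
Local Open Scope group_scope.

Section Fus.
Variables (gT : finGroupType) (S : {group gT}).
Variable F : {set gT} -> {ffun gT -> gT} -> bool.
Hypothesis HF : fusion_system S F.

Lemma Fmor P f : F P f ->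
  [/\ subgrp S P, {in P &, {morph f : x y / x * y}},
      {in P &, injective f} & f @: P \subset S].
Proof. by case: HF => [H _ _ _]; apply: H. Qed.

Lemma Fgrp P f : F P f -> group_set P.
Proof. by case/Fmor => /andP[]. Qed.

Lemma Fsub P f : F P f -> P \subset S.
Proof. by case/Fmor => /andP[]. Qed.

Lemma Fext P f (g : {ffun gT -> gT}) : F P f -> {in P, f =1 g} -> F P g.
Proof. by case: HF => [_ H _ _]; apply: H. Qed.

Lemma Fconjg P s : subgrp S P -> s \in S -> F P [ffun x => x ^ s].
Proof. by case: HF => [_ _ H _]; apply: H. Qed.

Lemma Fres P Q f : F P f -> subgrp P Q -> F Q f.
Proof. by case: HF => [_ _ _ [H _ _]]; apply: H. Qed.

Lemma Fcomp P f (g : {ffun gT -> gT}) : F P f -> F (f @: P) g -> F P [ffun x => g (f x)].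
Proof. by case: HF => [_ _ _ [_ H _]]; apply: H. Qed.

Lemma Finv P f (g : {ffun gT -> gT}) : F P f -> {in P, forall x, g (f x) = x} -> F (f @: P) g.
Proof. by case: HF => [_ _ _ [_ _ H]]; apply: H. Qed.

Lemma Fmor1 (P : {group gT}) f : F P f -> f 1 = 1.
Proof.
case/Fmor => _ fM _ _; apply: (mulgI (f 1)).
by rewrite -fM ?group1 // !mulg1.
Qed.

Lemma FmorX (P : {group gT}) f x n : F P f -> x \in P -> f (x ^+ n) = f x ^+ n.
Proof.
move=> FP xP; have [_ fM _ _] := Fmor FP.
elim: n => [|n IH]; first by rewrite !expg0 (Fmor1 FP).
by rewrite !expgS fM ?groupX // IH.
Qed.

Lemma Fcycle (P : {group gT}) f u : F P f -> u \in P -> f @: <[u]> = <[f u]>.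
Proof.
move=> FP uP; apply/setP => y; apply/imsetP/cycleP.
  by case=> x /cycleP[k ->] ->; exists k; rewrite (FmorX _ FP).
by case=> k ->; exists (u ^+ k); rewrite ?mem_cycle // (FmorX _ FP).
Qed.

Lemma Fres_cycle (P : {group gT}) f u : F P f -> u \in P -> F <[u]> f.
Proof.
move=> FP uP; apply: Fres FP _; rewrite /subgrp groupP /=.
by rewrite cycle_subG.
Qed.

Lemma Fid (P : {group gT}) : P \subset S -> F P [ffun x => x ^ 1].
Proof. by move=> sPS; apply: Fconjg; rewrite ?group1 // /subgrp groupP. Qed.

Lemma Fconj_refl (P : {group gT}) : P \subset S -> Fconj F P P.
Proof.
move=> sPS; apply/existsP; exists [ffun x => x ^ 1]; rewrite Fid //=.
apply/eqP/setP => y; apply/imsetP/idP => [[x xP ->]|yP]; first by rewrite ffunE conjg1.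
by exists y; rewrite // ffunE conjg1.
Qed.

Definition finv (P : {set gT}) (f : {ffun gT -> gT}) : {ffun gT -> gT} :=
  [ffun y => odflt y [pick x in P | f x == y]].

Lemma finvK P f : F P f -> {in P, forall x, finv P f (f x) = x}.
Proof.
move=> FP x xP; have [_ _ fI _] := Fmor FP.
rewrite ffunE; case: pickP => [x' /andP[x'P /eqP e] | /(_ x)]; last by rewrite xP eqxx.
by apply: fI.
Qed.

Lemma Fconj_sym P Q : Fconj F P Q -> Fconj F Q P.
Proof.
case/existsP => f /andP[FP /eqP e]; apply/existsP; exists (finv P f).
rewrite -e (Finv FP (finvK FP)) /=; apply/eqP.
rewrite -imset_comp; apply/setP => y; apply/imsetP/idP.
  by case=> x xP ->; rewrite /= finvK.
by move=> yP; exists y; rewrite //= finvK.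
Qed.

Lemma Fconj_trans P Q R : Fconj F P Q -> Fconj F Q R -> Fconj F P R.
Proof.
case/existsP => f /andP[FP /eqP e]; case/existsP => g /andP[FQ /eqP e'].
apply/existsP; exists [ffun x => g (f x)]; rewrite Fcomp ?e //=.
apply/eqP; rewrite -e' -e -imset_comp; apply: eq_imset => x; by rewrite ffunE.
Qed.

Lemma Fconj_card P Q : Fconj F P Q -> #|P| = #|Q|.
Proof.
case/existsP => f /andP[FP /eqP <-]; have [_ _ fI _] := Fmor FP.
by rewrite card_in_imset.
Qed.

Lemma Fconj_subgrp P Q : Fconj F P Q -> subgrp S P && subgrp S Q.
Proof.
case/existsP => f /andP[FP /eqP <-]; have [sP fM fI fS] := Fmor FP.
rewrite sP /= /subgrp fS andbT; move: sP => /andP[gP _].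
pose G := Group gP.
have -> : f @: P = f @: G by [].
apply/group_setP; split.
  by apply/imsetP; exists 1; rewrite ?group1 // (Fmor1 (P:=G)).
move=> _ _ /imsetP[x xP ->] /imsetP[y yP ->].
by apply/imsetP; exists (x * y); rewrite ?groupM // fM.
Qed.

Lemma Fconj_cyclic P Q : Fconj F P Q -> cyclic P -> cyclic Q.
Proof.
move=> PQ; have := Fconj_subgrp PQ; case/andP => /andP[gP _] _.
move: PQ; case/existsP => f /andP[FP /eqP <-].
pose G := Group gP; have -> : P = G by [].
case/cyclicP => u eG; apply/cyclicP; exists (f u).
have uG : u \in G by rewrite eG cycle_id.
by rewrite eG -(Fcycle (P := G)) // -eG.
Qed.


Lemma Fconj_refl_set P : subgrp S P -> Fconj F P P.
Proof.
case/andP => gP sPS; have := @Fconj_refl (Group gP) sPS; by [].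
Qed.

Lemma Fclass_eq P Q : Q \in Fclass S F P -> Fclass S F P = Fclass S F Q.
Proof.
rewrite inE => /andP[_ PQ]; apply/setP => X; rewrite !inE.
case: (subgrp S X) => //=; apply/idP/idP => H.
  exact: Fconj_trans (Fconj_sym PQ) H.
exact: Fconj_trans PQ H.
Qed.

Lemma Fclass_self P : subgrp S P -> P \in Fclass S F P.
Proof. by move=> sP; rewrite inE sP Fconj_refl_set. Qed.

Lemma rep_mem C : C \in Fclasses S F -> class_rep C \in C.
Proof.
case/imsetP => P; rewrite inE => sP ->.
rewrite /class_rep; case: pickP => [X -> // | /(_ P)].
by rewrite Fclass_self.
Qed.

Lemma class_uniq C1 C2 X : C1 \in Fclasses S F -> C2 \in Fclasses S F ->
  X \in C1 -> X \in C2 -> C1 = C2.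
Proof.
case/imsetP => P1 _ -> /imsetP[P2 _ ->] /Fclass_eq -> /Fclass_eq -> //.
Qed.

Lemma class_conj C X Y : C \in Fclasses S F -> X \in C -> Y \in C -> Fconj F X Y.
Proof.
case/imsetP => P _ -> XC; rewrite (Fclass_eq XC) inE => /andP[_ //].
Qed.

Lemma class_subgrp C X : C \in Fclasses S F -> X \in C -> subgrp S X.
Proof. by case/imsetP => P _ ->; rewrite inE => /andP[]. Qed.

Lemma cyc_classes C : C \in Fclasses_cyclic S F ->
  C \in Fclasses S F /\ cyclic (class_rep C).
Proof.
case/imsetP => P; rewrite inE => /andP[sP cP] eC.
have CF : C \in Fclasses S F by rewrite eC; apply: imset_f; rewrite inE.
split => //; have := rep_mem CF; rewrite {2}eC inE => /andP[_ PR].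
exact: Fconj_cyclic PR cP.
Qed.

Lemma cycle_class u : u \in S ->
  Fclass S F <[u]> \in Fclasses_cyclic S F /\ <[u]> \in Fclass S F <[u]>.
Proof.
move=> uS; have sU : subgrp S <[u]> by rewrite /subgrp groupP /= cycle_subG.
split; last exact: Fclass_self.
by apply: imset_f; rewrite inE sU cycle_cyclic.
Qed.

End Fus.

End PartP2.

Section PartP3.
Local Open Scope group_scope.

Lemma sum_subset_le (I : finType) (A B : {set I}) (G : I -> nat) :
  A \subset B -> \sum_(i in A) G i <= \sum_(i in B) G i.
Proof.
move=> sAB; rewrite [X in _ <= X](big_setID A) /= (setIidPr sAB); exact: leq_addr.
Qed.

Section KS.
Variables (gT : finGroupType) (S : {group gT}) (T : finType)
  (l : gT -> T -> T) (r : T -> gT -> T).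
Variable F : {set gT} -> {ffun gT -> gT} -> bool.
Hypothesis Hb : biset S l r.
Hypothesis HF : fusion_system S F.
Hypothesis Hst : Fstable l r S F.
Hypothesis Hg : Fgenerated l r S F.
Hypothesis Hreg : contains_regular l r S.

Local Notation fx := (fx l r).
Definition K u (Q : {set gT}) := \sum_(v in Q) fx u v.

Lemma fx_sub a v k : a \in S -> v \in S -> fx a v <= fx (a ^+ k) (v ^+ k).
Proof.
move=> aS vS; apply: subset_leq_card; apply/subsetP => x; rewrite !inE => /eqP e.
by rewrite -pairX (bactX Hb) // inE aS.
Qed.

Lemma Kgen a b (Q : {group gT}) : a \in S -> b \in S -> Q \subset S ->
  a \in <[b]> -> b \in <[a]> -> K a Q <= K b Q.
Proof.
move=> aS bS sQS /cycleP[k' ak'] /cycleP[k bk].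
have aK : a ^+ (k * k') = a by rewrite expgM -bk -ak'.
pose A := [set v in Q | 0 < fx a v].
have sAQ : A \subset Q by apply/subsetP => v; rewrite inE => /andP[].
have KA : K a Q = \sum_(v in A) fx a v.
  rewrite /K (bigID (fun v => 0 < fx a v)) /= [X in _ + X]big1 ?addn0.
    by apply: eq_bigl => v; rewrite inE.
  by move=> v /andP[_]; rewrite lt0n negbK => /eqP.
have vK : forall v, v \in A -> v ^+ (k * k') = v.
  move=> v; rewrite inE => /andP[vQ]; rewrite card_gt0 => /set0Pn[x].
  rewrite inE => /eqP fxv; have vS := subsetP sQS v vQ.
  apply/esym; apply: (fix_graph Hg (u := a) (x := x)) => //; first exact: groupX.
  by rewrite -{1}aK -pairX (bactX Hb) // inE aS.
have inj : {in A &, injective (fun v => v ^+ k)}.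
  move=> v w vA wA /= e; by rewrite -(vK v vA) -(vK w wA) !expgM e.
rewrite KA; apply: (@leq_trans (\sum_(v in A) fx b (v ^+ k))).
  apply: leq_sum => v vA; rewrite bk; apply: fx_sub => //.
  exact: subsetP sQS _ (subsetP sAQ _ vA).
rewrite -(big_imset (fun v => fx b v) inj) /=; apply: sum_subset_le.
apply/subsetP => _ /imsetP[v vA ->]; apply: groupX; exact: subsetP sAQ _ vA.
Qed.

Lemma Kgen_eq a b (Q : {group gT}) : a \in S -> b \in S -> Q \subset S ->
  <[a]> = <[b]> -> K a Q = K b Q.
Proof.
move=> aS bS sQS e; apply/eqP; rewrite eqn_leq !Kgen // ?e ?cycle_id // -?e ?cycle_id //.
Qed.


Lemma Kclass u w (Q : {group gT}) : u \in S -> w \in S -> Q \subset S ->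
  Fconj F <[u]> <[w]> -> K u Q = K w Q.
Proof.
move=> uS wS sQS /existsP[phi /andP[Fphi /eqP e]].
have uU : u \in <[u]>%G by rewrite cycle_id.
have Fphi' : F <[u]>%G phi by [].
have e1 : K u Q = K (phi u) Q.
  apply: eq_bigr => v vQ.
  rewrite (fx_stab Hst Fphi' (Fid HF sQS) uU vQ) ffunE conjg1 //.
have [_ _ _ phiS] := Fmor HF Fphi.
have phiuS : phi u \in S by apply: (subsetP phiS); apply: imset_f.
rewrite e1; apply: Kgen_eq => //.
by rewrite -(Fcycle HF Fphi' uU) e.
Qed.

Definition rgen (E : {set {set gT}}) : gT :=
  odflt 1 [pick g | <[g]> == class_rep E].

Lemma rgen_spec E : E \in Fclasses_cyclic S F ->
  <[rgen E]> = class_rep E /\ rgen E \in S.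
Proof.
move=> EC; have [EF cE] := cyc_classes HF EC.
have sR := class_subgrp EF (rep_mem HF EF).
have [g eg] := cyclicP cE.
rewrite /rgen; case: pickP => [g' /eqP e | /(_ g)]; last by rewrite eg eqxx.
split => //; move: sR => /andP[_ sR]; rewrite -cycle_subG e //.
Qed.

Lemma main_id (P Q : {group gT}) : P \subset S -> Q \subset S ->
  (n_orbits l r P Q * (#|P| * #|Q|))%N =
  \sum_(E in Fclasses_cyclic S F) #|[set u in P | <[u]> \in E]| * K (rgen E) Q.
Proof.
move=> sPS sQS; rewrite (burnside Hb sPS sQS).
have step : forall u, u \in P -> K u Q =
    \sum_(E | (E \in Fclasses_cyclic S F) && (<[u]> \in E)) K (rgen E) Q.
  move=> u uP; have uS := subsetP sPS _ uP.
  have [cyc self] := cycle_class HF uS.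
  rewrite (big_pred1 (Fclass S F <[u]>)); last first.
    move=> E /=; apply/andP/eqP => [[EC uE]|->]; last by [].
    have [EF _] := cyc_classes HF EC; have [cF _] := cyc_classes HF cyc.
    exact: class_uniq EF cF uE self.
  have [cF _] := cyc_classes HF cyc; have [eR gS] := rgen_spec cyc.
  apply: Kclass => //; apply: (class_conj HF cF self).
  by rewrite eR; apply: (rep_mem HF).
rewrite (eq_bigr _ step) (exchange_big_dep (fun E => E \in Fclasses_cyclic S F)) /=; last first.
  by move=> u E _ /andP[].
apply: eq_bigr => E EC; rewrite -sum_nat_const; apply: eq_bigl => u.
by rewrite !inE EC.
Qed.


Lemma class_closed C X Y : C \in Fclasses S F -> X \in C -> subgrp S Y ->
  Fconj F X Y -> Y \in C.
Proof.
case/imsetP => P _ -> XC sY XY; rewrite (Fclass_eq HF XC) inE sY //.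
Qed.

Lemma sub_card_eq (A B : {set gT}) : A \subset B -> #|B| <= #|A| -> A = B.
Proof. by move=> sAB leBA; apply/eqP; rewrite eqEcard sAB. Qed.

Definition Xn (C E : {set {set gT}}) := #|[set u in class_rep C | <[u]> \in E]|.

Lemma Xn_diag C : C \in Fclasses_cyclic S F -> 0 < Xn C C.
Proof.
move=> CC; have [EF _] := cyc_classes HF CC; have [eR _] := rgen_spec CC.
rewrite card_gt0; apply/set0Pn; exists (rgen C).
by rewrite inE -{1}eR cycle_id eR (rep_mem HF EF).
Qed.

Lemma Xn_tri C E : C \in Fclasses_cyclic S F -> E \in Fclasses_cyclic S F ->
  0 < Xn C E -> E = C \/ #|class_rep E| < #|class_rep C|.
Proof.
move=> CC EC; rewrite card_gt0 => /set0Pn[u]; rewrite inE => /andP[uR uE].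
have [CF _] := cyc_classes HF CC; have [EF _] := cyc_classes HF EC.
have /andP[gR sRS] := class_subgrp CF (rep_mem HF CF).
have sU : <[u]> \subset class_rep C.
  by have -> : class_rep C = Group gR by []; rewrite cycle_subG.
have cE : #|class_rep E| = #|<[u]>|.
  have := class_conj HF EF (rep_mem HF EF) uE; move/(Fconj_card HF). done.
case: (ltngtP #|class_rep E| #|class_rep C|) => [lt|gt|eq]; first by right.
  by move: (subset_leq_card sU); rewrite -cE leqNgt gt.
left; have eU := sub_card_eq sU (eq_leq (etrans (esym eq) cE)).
have H := class_uniq HF EF CF; apply: H (rep_mem HF CF); rewrite -eU; exact uE.
Qed.

Definition Yn (E D : {set {set gT}}) := K (rgen E) (class_rep D).

Lemma Yn_diag D : D \in Fclasses_cyclic S F -> 0 < Yn D D.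
Proof.
move=> DC; have [eR gS] := rgen_spec DC.
have gR : rgen D \in class_rep D by rewrite -eR cycle_id.
rewrite /Yn /K (bigD1 (rgen D)) //=; apply: leq_trans (fx_reg Hreg gS) _.
exact: leq_addr.
Qed.

Lemma Yn_tri E D : E \in Fclasses_cyclic S F -> D \in Fclasses_cyclic S F ->
  0 < Yn E D -> E = D \/ #|class_rep E| < #|class_rep D|.
Proof.
move=> EC DC pos.
have [v /andP[vR fpos]] : exists v, (v \in class_rep D) && (0 < fx (rgen E) v).
  apply/existsP; apply: contraLR pos; rewrite negb_exists => /forallP H.
  rewrite -leqNgt leqn0 /Yn /K; apply/eqP; apply: big1 => v vR.
  by have := H v; rewrite vR /= lt0n negbK => /eqP.
have [DF _] := cyc_classes HF DC; have [EF _] := cyc_classes HF EC.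
have /andP[gR sRS] := class_subgrp DF (rep_mem HF DF).
have [eR gS] := rgen_spec EC.
have vS : v \in S := subsetP sRS _ vR.
have [P [phi [FP gP ev]]] := fx_gen0 Hg gS vS fpos.
have Fc := Fres_cycle HF FP gP.
have Fconj1 : Fconj F (class_rep E) <[v]>.
  apply/existsP; exists phi; rewrite -eR Fc /=.
  by rewrite (Fcycle HF (P := <[rgen E]>%G) Fc (cycle_id _)) ev.
have sU : <[v]> \subset class_rep D.
  by have -> : class_rep D = Group gR by []; rewrite cycle_subG.
have cE : #|class_rep E| = #|<[v]>| := Fconj_card HF Fconj1.
case: (ltngtP #|class_rep E| #|class_rep D|) => [lt|gt|eq]; first by right.
  by move: (subset_leq_card sU); rewrite -cE leqNgt gt.
left; have eU := sub_card_eq sU (eq_leq (etrans (esym eq) cE)).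
have H := class_uniq HF EF DF; apply: H (rep_mem HF DF).
have H2 := class_closed EF (rep_mem HF EF); apply: H2; first exact: class_subgrp DF (rep_mem HF DF).
by rewrite -eU.
Qed.

End KS.

End PartP3.

Section PartP4.
Import GRing.Theory Num.Theory.
Local Open Scope ring_scope.

Lemma ratn_neq0 (n k : nat) : (0 < k)%N -> ((n%:R / k%:R : rat) != 0) = (0 < n)%N.
Proof.
move=> kpos; rewrite mulf_eq0 invr_eq0 !pnatr_eq0 negb_or.
by rewrite -!lt0n kpos andbT.
Qed.

Lemma tri_unit c (M : 'M[rat]_c) (w : 'I_c -> nat) :
  (forall i j, M i j != 0 -> i = j \/ (w i < w j)%N) ->
  (forall i, M i i != 0) -> M \in unitmx.
Proof.
move=> tri diag.
have key : forall v : 'rV[rat]_c, v *m M = 0 -> v = 0.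
  move=> v vM; apply/rowP => j0; rewrite mxE; apply/eqP; apply/negPn/negP => nz.
  case: (@arg_minnP _ j0 (fun i => v 0 i != 0) w nz) => i0 nz0 min0.
  have := congr1 (fun A : 'rV[rat]_c => A 0 i0) vM; rewrite !mxE (bigD1 i0) //= big1.
    by rewrite addr0 => /eqP; rewrite mulf_eq0 (negPf nz0) (negPf (diag i0)).
  move=> i ne; case: (eqVneq (v 0 i) 0) => [->|vi]; first by rewrite mul0r.
  case: (eqVneq (M i i0) 0) => [->|Mi]; first by rewrite mulr0.
  case: (tri i i0 Mi) => [e|lt]; first by rewrite e eqxx in ne.
  by have := min0 i vi; rewrite leqNgt lt.
rewrite -row_free_unit -kermx_eq0; apply/eqP/row_matrixP => k; rewrite row0.
by apply: key; apply/sub_kermxP; apply: row_sub.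
Qed.

Lemma rank_mxsub m n m' n' (f : 'I_m' -> 'I_m) (g : 'I_n' -> 'I_n) (A : 'M[rat]_(m, n)) :
  (\rank (mxsub f g A) <= \rank A)%N.
Proof.
have -> : mxsub f g A = mxsub f g (A *m 1%:M) by rewrite mulmx1.
rewrite mxsub_mul; apply: leq_trans (mxrankM_maxl _ _) _.
exact: mxrankS (rowsub_sub _ _).
Qed.

End PartP4.

Import GRing.Theory Num.Theory.

Lemma rep_card (gT : finGroupType) (S : {group gT}) F C :
  C \in Fclasses S F -> fusion_system S F -> (0 < #|class_rep C|)%N.
Proof.
move=> CF HF; have /andP[gR _] := class_subgrp CF (rep_mem HF CF).
by rewrite card_gt0; apply/set0Pn; exists 1%g; have := @group1 _ (Group gR).
Qed.


Definition Xmat (gT : finGroupType) (S : {group gT}) (F : {set gT} -> {ffun gT -> gT} -> bool)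
  : 'M[rat]_(#|Fclasses S F|, #|Fclasses_cyclic S F|) :=
  \matrix_(i, E) ((#|[set u in class_rep (enum_val i) | <[u]>%g \in (enum_val E : {set {set gT}})]|)%:R
                  / #|class_rep (enum_val i)|%:R)%R.

Definition Kmat (gT : finGroupType) (S : {group gT}) (F : {set gT} -> {ffun gT -> gT} -> bool)
    (T : finType) (l : gT -> T -> T) (r : T -> gT -> T)
  : 'M[rat]_(#|Fclasses_cyclic S F|, #|Fclasses S F|) :=
  \matrix_(E, j) ((K l r (rgen (enum_val E)) (class_rep (enum_val j)))%:R
                  / #|class_rep (enum_val j)|%:R)%R.

Theorem proposition3p1 (p : nat) (gT : finGroupType) (S : {group gT})
    (F : {set gT} -> {ffun gT -> gT} -> bool)
    (T : finType) (l : gT -> T -> T) (r : T -> gT -> T) :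
  prime p -> (p.-group S)%g -> saturated p S F ->
  biset S l r -> Fstable l r S F -> Fgenerated l r S F ->
  contains_regular l r S ->
  \rank (orbit_matrix S F l r) = #|Fclasses_cyclic S F|.
Proof.
move=> _ _ [HF _] Hb Hst Hg Hreg.
pose Xm := Xmat S F; pose Km := Kmat S F l r.
have NXK : orbit_matrix S F l r = (Xm *m Km)%R.
  apply/matrixP => i j; rewrite !mxE.
  have iF := enum_valP i; have jF := enum_valP j.
  have /andP[gP sPS] := class_subgrp iF (rep_mem HF iF).
  have /andP[gQ sQS] := class_subgrp jF (rep_mem HF jF).
  have pP := rep_card iF HF; have pQ := rep_card jF HF.
  have := main_id Hb HF Hst Hg (P := Group gP) (Q := Group gQ) sPS sQS.
  rewrite /= => E.
  have -> : (\sum_j0 Xm i j0 * Km j0 j =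
     (\sum_(E0 in Fclasses_cyclic S F)
        (#|[set u in class_rep (enum_val i) | <[u]>%g \in E0]| *
          K l r (rgen E0) (class_rep (enum_val j)))%:R)
       / (#|class_rep (enum_val i)|%:R * #|class_rep (enum_val j)|%:R))%R.
    rewrite [in RHS]big_enum_val mulr_suml; apply: eq_bigr => E0 _; rewrite /Xm /Km !mxE natrM.
    by rewrite invfM mulrACA.
  rewrite -natr_sum -E !natrM mulfK //.
  by rewrite mulf_neq0 // pnatr_eq0 -lt0n.
have x0 : Fclass S F S \in Fclasses S F.
  by apply: imset_f; rewrite inE /subgrp groupP subxx.
have cF : forall E : 'I_#|Fclasses_cyclic S F|, enum_val E \in Fclasses S F.
  by move=> E; have [] := cyc_classes HF (enum_valP E).
pose f := fun E : 'I_#|Fclasses_cyclic S F| => enum_rank_in x0 (enum_val E).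
have fE : forall E, enum_val (f E) = enum_val E.
  by move=> E; rewrite /f enum_rankK_in.
have uX : rowsub f Xm \in unitmx.
  rewrite -unitmx_tr; apply: (tri_unit (w := fun E => #|class_rep (enum_val E)|)).
    move=> E C; rewrite !mxE fE ratn_neq0 ?(rep_card (cF _) HF) // => pos.
    have := Xn_tri HF (enum_valP C) (enum_valP E) pos.
    by case=> [/enum_val_inj -> | lt]; [left | right].
  by move=> E; rewrite !mxE fE ratn_neq0 ?(rep_card (cF _) HF) //; exact: (Xn_diag HF (enum_valP E)).
have uK : colsub f Km \in unitmx.
  apply: (tri_unit (w := fun E => #|class_rep (enum_val E)|)).
    move=> E D; rewrite !mxE fE ratn_neq0 ?(rep_card (cF _) HF) // => pos.
    have := Yn_tri HF Hg (enum_valP E) (enum_valP D) pos.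
    by case=> [/enum_val_inj -> | lt]; [left | right].
  by move=> E; rewrite !mxE fE ratn_neq0 ?(rep_card (cF _) HF) //; exact: (Yn_diag HF Hreg (enum_valP E)).
apply/eqP; rewrite eqn_leq; apply/andP; split.
  by rewrite NXK; apply: leq_trans (mxrankM_maxl _ _) (rank_leq_col _).
have uXK : (rowsub f Xm *m colsub f Km)%R \in unitmx by rewrite unitmx_mul uX uK.
rewrite -{1}(mxrank_unit uXK) -mxsub_mul -NXK.
exact: rank_mxsub.
Qed.
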